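(* The following first-order theories do not have the amalgamation property: (a) the theory of an antisymmetric binary relation $S$ together with two partial orders $\le$ and $\le'$, both finer than $S$ (i.e. ${\le}\subseteq S$ and ${\le'}\subseteq S$); (b) the theory of an antisymmetric binary relation $S$ together with two transitive binary relations, both finer than $S$; (c) the theory of a partial order $\le$ together with a coarser antisymmetric binary relation $S$ (${\le}\subseteq S$) and a bijective unary operation $f$ which is $S$-preserving ($x\,S\,y$ implies $f(x)\,S\,f(y)$).
   Context: A theory has the amalgamation property (AP) if whenever $\mathbf{A},\mathbf{B},\mathbf{C}$ are models with $\mathbf{C}\subseteq\mathbf{A}$, $\mathbf{C}\subseteq\mathbf{B}$ and $C=A\cap B$, there are a model $\mathbf{D}$ and embeddings of $\mathbf{A}$ and $\mathbf{B}$ into $\mathbf{D}$ which agree on $C$. *)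

(* Defs.v *)
Set Implicit Arguments.
Unset Strict Implicit.

Record sig3 (T : Type) := Sig3 {
  r0 : T -> T -> Prop;
  r1 : T -> T -> Prop;
  r2 : T -> T -> Prop }.

Definition emb3 (T U : Type) (M : sig3 T) (N : sig3 U) (g : T -> U) : Prop :=
  (forall x y, g x = g y -> x = y) /\
  (forall x y, (r0 M x y <-> r0 N (g x) (g y)) /\
               (r1 M x y <-> r1 N (g x) (g y)) /\
               (r2 M x y <-> r2 N (g x) (g y))).

Record sigF (T : Type) := SigF {
  rl : T -> T -> Prop;
  rs : T -> T -> Prop;
  fn : T -> T }.

Definition embF (T U : Type) (M : sigF T) (N : sigF U) (g : T -> U) : Prop :=
  (forall x y, g x = g y -> x = y) /\
  (forall x y, (rl M x y <-> rl N (g x) (g y)) /\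
               (rs M x y <-> rs N (g x) (g y))) /\
  (forall x, g (fn M x) = fn N (g x)).

Definition inclA (U : Type) (A B : U -> Prop) (c : {x : U | A x /\ B x}) : {x : U | A x} :=
  exist _ (proj1_sig c) (proj1 (proj2_sig c)).
Definition inclB (U : Type) (A B : U -> Prop) (c : {x : U | A x /\ B x}) : {x : U | B x} :=
  exist _ (proj1_sig c) (proj2 (proj2_sig c)).

(* Amalgamation property of a theory (given by its class of models Th).
   A, B are models whose universes are subsets of a common set U; C is a model on
   A ∩ B which is a substructure of both A and B (the inclusions are embeddings). *)
Definition AP3 (Th : forall T : Type, sig3 T -> Prop) : Prop :=
  forall (U : Type) (A B : U -> Prop)
         (MA : sig3 {x : U | A x}) (MB : sig3 {x : U | B x})
         (MC : sig3 {x : U | A x /\ B x}),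
    Th _ MA -> Th _ MB -> Th _ MC ->
    emb3 MC MA (@inclA U A B) -> emb3 MC MB (@inclB U A B) ->
    exists (D : Type) (MD : sig3 D) (fA : {x : U | A x} -> D) (fB : {x : U | B x} -> D),
      Th _ MD /\ emb3 MA MD fA /\ emb3 MB MD fB /\
      (forall c, fA (@inclA U A B c) = fB (@inclB U A B c)).

Definition APF (Th : forall T : Type, sigF T -> Prop) : Prop :=
  forall (U : Type) (A B : U -> Prop)
         (MA : sigF {x : U | A x}) (MB : sigF {x : U | B x})
         (MC : sigF {x : U | A x /\ B x}),
    Th _ MA -> Th _ MB -> Th _ MC ->
    embF MC MA (@inclA U A B) -> embF MC MB (@inclB U A B) ->
    exists (D : Type) (MD : sigF D) (fA : {x : U | A x} -> D) (fB : {x : U | B x} -> D),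
      Th _ MD /\ embF MA MD fA /\ embF MB MD fB /\
      (forall c, fA (@inclA U A B c) = fB (@inclB U A B c)).

Definition antisym (T : Type) (R : T -> T -> Prop) := forall x y, R x y -> R y x -> x = y.
Definition transitive (T : Type) (R : T -> T -> Prop) := forall x y z, R x y -> R y z -> R x z.
Definition reflexive (T : Type) (R : T -> T -> Prop) := forall x, R x x.
Definition partial_order (T : Type) (R : T -> T -> Prop) :=
  reflexive R /\ transitive R /\ antisym R.
Definition subrel (T : Type) (R R' : T -> T -> Prop) := forall x y, R x y -> R' x y.
Definition bijective (T : Type) (f : T -> T) :=
  (forall x y, f x = f y -> x = y) /\ (forall y, exists x, f x = y).

(* (a): r0 = S antisymmetric, r1 = ≤ and r2 = ≤' partial orders contained in S *)
Definition ThA (T : Type) (M : sig3 T) : Prop :=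
  inhabited T /\ antisym (r0 M) /\ partial_order (r1 M) /\ partial_order (r2 M) /\
  subrel (r1 M) (r0 M) /\ subrel (r2 M) (r0 M).

Definition ThB (T : Type) (M : sig3 T) : Prop :=
  inhabited T /\ antisym (r0 M) /\ transitive (r1 M) /\ transitive (r2 M) /\
  subrel (r1 M) (r0 M) /\ subrel (r2 M) (r0 M).

(* (c): rl = ≤ partial order, rs = S antisymmetric with ≤ ⊆ S, fn = f bijective, S-preserving *)
Definition ThC (T : Type) (M : sigF T) : Prop :=
  inhabited T /\ partial_order (rl M) /\ antisym (rs M) /\ subrel (rl M) (rs M) /\
  bijective (fn M) /\ (forall x y, rs M x y -> rs M (fn M x) (fn M y)).

(* Main.v *)
Require Import Defs.

Inductive E := c1 | c2 | ea | efa | eb | efb.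

Ltac dsig := repeat match goal with
  | x : {_ : E | _} |- _ => let p := fresh "p" in destruct x as [[] p]
  end; simpl in *;
  repeat match goal with
  | p : True |- _ => destruct p
  | p : False |- _ => destruct p
  | p : _ /\ _ |- _ => destruct p
  end.

Definition A3 (x : E) : Prop := match x with c1 | c2 | ea => True | _ => False end.
Definition B3 (x : E) : Prop := match x with c1 | c2 | eb => True | _ => False end.
Definition R1 (x y : E) : Prop := x = y \/ (x = c1 /\ y = ea) \/ (x = eb /\ y = c1).
Definition R2 (x y : E) : Prop := x = y \/ (x = ea /\ y = c2) \/ (x = c2 /\ y = eb).
Definition R0 (x y : E) : Prop := R1 x y \/ R2 x y.

Definition mk3 (P : E -> Prop) : sig3 {x : E | P x} :=
  Sig3 (fun x y => R0 (proj1_sig x) (proj1_sig y))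
       (fun x y => R1 (proj1_sig x) (proj1_sig y))
       (fun x y => R2 (proj1_sig x) (proj1_sig y)).

Definition MA3 := mk3 A3.
Definition MB3 := mk3 B3.
Definition MC3 := mk3 (fun x => A3 x /\ B3 x).

Ltac rsolve := unfold R0, R1, R2 in *; intuition congruence.

Lemma ThA_A : ThA MA3.
Proof.
  unfold ThA, partial_order, antisym, transitive, reflexive, subrel; simpl.
  repeat split; try (exact (exist _ c1 I));
  intros; dsig; try rsolve; try reflexivity; rsolve.
Qed.
Lemma ThA_B : ThA MB3.
Proof.
  unfold ThA, partial_order, antisym, transitive, reflexive, subrel; simpl.
  repeat split; try (exact (exist _ c1 I));
  intros; dsig; try rsolve; try reflexivity; rsolve.
Qed.
Lemma ThA_C : ThA MC3.
Proof.
  unfold ThA, partial_order, antisym, transitive, reflexive, subrel; simpl.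
  repeat split; try (exact (exist _ c1 (conj I I)));
  intros; dsig; try rsolve; try reflexivity; rsolve.
Qed.

Lemma ThA_ThB T (M : sig3 T) : ThA M -> ThB M.
Proof.
  unfold ThA, ThB, partial_order; intuition.
Qed.

Lemma embCA3 : emb3 MC3 MA3 (@inclA E A3 B3).
Proof.
  split.
  - intros x y H; dsig; try discriminate; reflexivity.
  - intros; simpl; tauto.
Qed.
Lemma embCB3 : emb3 MC3 MB3 (@inclB E A3 B3).
Proof.
  split.
  - intros x y H; dsig; try discriminate; reflexivity.
  - intros; simpl; tauto.
Qed.

Lemma exA x (p q : A3 x) : exist A3 x p = exist A3 x q.
Proof. destruct x; simpl in p, q; try destruct p; destruct q; reflexivity. Qed.
Lemma exB x (p q : B3 x) : exist B3 x p = exist B3 x q.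
Proof. destruct x; simpl in p, q; try destruct p; destruct q; reflexivity. Qed.

Lemma key3 (Th : forall T : Type, sig3 T -> Prop)
  (Hth : forall T M, Th T M -> antisym (r0 M) /\ transitive (r1 M) /\ transitive (r2 M)
            /\ subrel (r1 M) (r0 M) /\ subrel (r2 M) (r0 M))
  (HA : Th _ MA3) (HB : Th _ MB3) (HC : Th _ MC3) : ~ AP3 Th.
Proof.
  intro H.
  destruct (H E A3 B3 MA3 MB3 MC3 HA HB HC embCA3 embCB3)
    as (D & MD & fA & fB & HD & [iA eA] & [iB eB] & ag).
  destruct (Hth _ _ HD) as (anti & t1 & t2 & s1 & s2).
  pose (a1 := exist A3 c1 I). pose (a2 := exist A3 c2 I). pose (aa := exist A3 ea I).
  pose (b1 := exist B3 c1 I). pose (b2 := exist B3 c2 I). pose (bb := exist B3 eb I).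
  assert (g1 : fA a1 = fB b1).
  { transitivity (fA (inclA (exist (fun x => A3 x /\ B3 x) c1 (conj I I)))).
    - f_equal; unfold inclA; apply exA.
    - rewrite ag; f_equal; unfold inclB; apply exB. }
  assert (g2 : fA a2 = fB b2).
  { transitivity (fA (inclA (exist (fun x => A3 x /\ B3 x) c2 (conj I I)))).
    - f_equal; unfold inclA; apply exA.
    - rewrite ag; f_equal; unfold inclB; apply exB. }
  assert (h1 : r1 MD (fB bb) (fB b1)).
  { apply (proj1 (proj1 (proj2 (eB bb b1)))). simpl. rsolve. }
  assert (h2 : r1 MD (fA a1) (fA aa)).
  { apply (proj1 (proj1 (proj2 (eA a1 aa)))). simpl. rsolve. }
  assert (h3 : r2 MD (fA aa) (fA a2)).
  { apply (proj1 (proj2 (proj2 (eA aa a2)))). simpl. rsolve. }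
  assert (h4 : r2 MD (fB b2) (fB bb)).
  { apply (proj1 (proj2 (proj2 (eB b2 bb)))). simpl. rsolve. }
  rewrite <- g1 in h1. rewrite <- g2 in h4.
  assert (e : fB bb = fA aa).
  { apply anti; [apply s1; exact (t1 _ _ _ h1 h2) | apply s2; exact (t2 _ _ _ h3 h4)]. }
  rewrite e in h1.
  pose proof (proj2 (proj1 (proj2 (eA aa a1))) h1) as hh.
  simpl in hh. rsolve.
Qed.

Definition AC (x : E) : Prop := match x with c1 | c2 | ea | efa => True | _ => False end.
Definition BC (x : E) : Prop := match x with c1 | c2 | eb | efb => True | _ => False end.
Definition F (x : E) : E :=
  match x with ea => efa | efa => ea | eb => efb | efb => eb | y => y end.
Definition L (x y : E) : Prop :=
  x = y \/ (x = c1 /\ y = ea) \/ (x = efa /\ y = c2) \/ (x = eb /\ y = c1) \/ (x = c2 /\ y = efb).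
Definition S (x y : E) : Prop :=
  x = y \/ (x = c1 /\ y = ea) \/ (x = c1 /\ y = efa) \/ (x = ea /\ y = c2) \/ (x = efa /\ y = c2)
  \/ (x = eb /\ y = c1) \/ (x = efb /\ y = c1) \/ (x = c2 /\ y = efb) \/ (x = c2 /\ y = eb).

Lemma clA x : AC x -> AC (F x). Proof. destruct x; simpl; tauto. Qed.
Lemma clB x : BC x -> BC (F x). Proof. destruct x; simpl; tauto. Qed.
Lemma clC x : AC x /\ BC x -> AC (F x) /\ BC (F x). Proof. destruct x; simpl; tauto. Qed.

Lemma exAC x (p q : AC x) : exist AC x p = exist AC x q.
Proof. destruct x; simpl in p, q; try destruct p; destruct q; reflexivity. Qed.
Lemma exBC x (p q : BC x) : exist BC x p = exist BC x q.
Proof. destruct x; simpl in p, q; try destruct p; destruct q; reflexivity. Qed.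
Lemma exCC x (p q : AC x /\ BC x) : exist (fun x => AC x /\ BC x) x p = exist (fun x => AC x /\ BC x) x q.
Proof. destruct x; simpl in p, q; destruct p as [p1 p2], q as [q1 q2]; try destruct p1; try destruct p2;
  try destruct q1; try destruct q2; reflexivity. Qed.

Definition mkF (P : E -> Prop) (cl : forall x, P x -> P (F x)) : sigF {x : E | P x} :=
  SigF (fun x y => L (proj1_sig x) (proj1_sig y))
       (fun x y => S (proj1_sig x) (proj1_sig y))
       (fun x => exist P (F (proj1_sig x)) (cl _ (proj2_sig x))).

Definition MAF := @mkF AC clA.
Definition MBF := @mkF BC clB.
Definition MCF := @mkF (fun x => AC x /\ BC x) clC.

Ltac fsolve := unfold L, S in *; intuition congruence.

Ltac thc w :=
  unfold ThC, partial_order, antisym, transitive, reflexive, subrel, bijective; simpl;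
  repeat split; try (exact w);
  intros; dsig; try fsolve; try reflexivity; try fsolve;
  try discriminate.

Lemma ThC_A : ThC MAF.
Proof.
  thc (exist AC c1 I).
  all: match goal with |- exists _, _ = exist _ ?v _ => exists (exist AC (F v) I); apply exAC end.
Qed.

Lemma ThC_B : ThC MBF.
Proof.
  thc (exist BC c1 I).
  all: match goal with |- exists _, _ = exist _ ?v _ => exists (exist BC (F v) I); apply exBC end.
Qed.

Lemma ThC_C : ThC MCF.
Proof.
  thc (exist (fun x => AC x /\ BC x) c1 (conj I I)).
  all: match goal with |- exists _, _ = exist _ ?v _ => exists (exist (fun x => AC x /\ BC x) (F v) (conj I I)); apply exCC end.
Qed.


Lemma embCAF : embF MCF MAF (@inclA E AC BC).
Proof.
  split; [|split].
  - intros x y H; dsig; try discriminate; reflexivity.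
  - intros; simpl; tauto.
  - intros [x p]; unfold inclA; simpl; apply exAC.
Qed.
Lemma embCBF : embF MCF MBF (@inclB E AC BC).
Proof.
  split; [|split].
  - intros x y H; dsig; try discriminate; reflexivity.
  - intros; simpl; tauto.
  - intros [x p]; unfold inclB; simpl; apply exBC.
Qed.

Lemma keyC : ~ APF ThC.
Proof.
  intro H.
  destruct (H E AC BC MAF MBF MCF ThC_A ThC_B ThC_C embCAF embCBF)
    as (D & MD & fA & fB & HD & [iA [eA fcA]] & [iB [eB fcB]] & ag).
  destruct HD as (_ & [_ [tl _]] & anti & sub & _ & pres).
  pose (a1 := exist AC c1 I). pose (a2 := exist AC c2 I).
  pose (aa := exist AC ea I). pose (afa := exist AC efa I).
  pose (b1 := exist BC c1 I). pose (b2 := exist BC c2 I).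
  pose (bb := exist BC eb I). pose (bfb := exist BC efb I).
  assert (g1 : fA a1 = fB b1).
  { transitivity (fA (inclA (exist (fun x => AC x /\ BC x) c1 (conj I I)))).
    - f_equal; unfold inclA; apply exAC.
    - rewrite ag; f_equal; unfold inclB; apply exBC. }
  assert (g2 : fA a2 = fB b2).
  { transitivity (fA (inclA (exist (fun x => AC x /\ BC x) c2 (conj I I)))).
    - f_equal; unfold inclA; apply exAC.
    - rewrite ag; f_equal; unfold inclB; apply exBC. }
  assert (h1 : rl MD (fB bb) (fB b1)).
  { apply (proj1 (proj1 (eB bb b1))). simpl. fsolve. }
  assert (h2 : rl MD (fA a1) (fA aa)).
  { apply (proj1 (proj1 (eA a1 aa))). simpl. fsolve. }
  assert (h3 : rl MD (fA afa) (fA a2)).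
  { apply (proj1 (proj1 (eA afa a2))). simpl. fsolve. }
  assert (h4 : rl MD (fB b2) (fB bfb)).
  { apply (proj1 (proj1 (eB b2 bfb))). simpl. fsolve. }
  assert (fa1 : fn MD (fA aa) = fA afa).
  { rewrite <- fcA; f_equal; apply exAC. }
  assert (fa2 : fn MD (fA afa) = fA aa).
  { rewrite <- fcA; f_equal; apply exAC. }
  assert (fb1 : fn MD (fB bb) = fB bfb).
  { rewrite <- fcB; f_equal; apply exBC. }
  assert (fb2 : fn MD (fB bfb) = fB bb).
  { rewrite <- fcB; f_equal; apply exBC. }
  rewrite <- g1 in h1. rewrite <- g2 in h4.
  assert (s1 : rs MD (fB bfb) (fA afa)).
  { rewrite <- fa1, <- fb1. apply pres, sub. exact (tl _ _ _ h1 h2). }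
  assert (s2 : rs MD (fA afa) (fB bfb)).
  { apply sub. exact (tl _ _ _ h3 h4). }
  assert (e : fB bb = fA aa).
  { rewrite <- fa2, <- fb2. f_equal. apply anti; assumption. }
  rewrite e in h1.
  pose proof (proj2 (proj1 (eA aa a1)) h1) as hh.
  simpl in hh. fsolve.
Qed.

Theorem proposition3p5 : ~ AP3 ThA /\ ~ AP3 ThB /\ ~ APF ThC.
Proof.
  split; [|split].
  - apply key3; [|exact ThA_A | exact ThA_B | exact ThA_C].
    intros T M (_ & an & [_ [t1 _]] & [_ [t2 _]] & s1 & s2). tauto.
  - apply key3; [|exact (ThA_ThB _ _ ThA_A) | exact (ThA_ThB _ _ ThA_B) | exact (ThA_ThB _ _ ThA_C)].
    intros T M (_ & an & t1 & t2 & s1 & s2). tauto.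
  - exact keyC.
Qed.
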